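(* The max-min fairness mechanism (MMF) is efficient, fair, and strategy-proof. That is, for every $n\ge 1$, every vector of entitlements $e_1,\dots,e_n>0$ with $\sum_i e_i=1$, and for agents whose utilities are as described in the context: (i) (efficiency) for every vector of true demands $d^*\in\mathbb{R}_+^n$, if every agent reports her true demand and $a$ is the MMF output, then $\ell(d^*,a)=0$; (ii) (fairness) for every agent $i$ who reports her true demand $d_i^*$ and for any demands reported by the other agents, the MMF output $a$ satisfies $u_i(a_i)\ge u_i(e_i)$; (iii) (strategy-proofness) for every agent $i$ and every fixed vector of demands reported by the other agents, if $a^\star$ is the MMF output when $i$ reports $d_i^*$ and $a$ is the MMF output when $i$ reports any other $d_i\ge 0$, then $u_i(a^\star_i)\ge u_i(a_i)$.
   Context: A divisible resource of total size $1$ is shared by $n$ agents; agent $i$ has entitlement $e_i>0$ with $\sum_i e_i=1$. Agent $i$ has a true demand $d_i^*\ge 0$ and a utility $u_i:\mathbb{R}_+\to\mathbb{R}_+$ that is strictly increasing on $[0,d_i^*]$ and satisfies $u_i(x)=u_i(d_i^* )$ for all $x\ge d_i^*$. MMF: given entitlements $e$ and reported demands $d_1,\dots,d_n\ge 0$, set $r=1$, $E=1$, $S=\{1,\dots,n\}$, $a=0\in\mathbb{R}^n$. Process the agents $j$ in ascending order of $d_j/e_j$. For the current $j$: if $d_j<r e_j/E$, set $a_j=d_j$, remove $j$ from $S$, update $r\leftarrow r-d_j$, $E\leftarrow E-e_j$, and continue with the next agent; otherwise set $a_k=r e_k/E$ for all $k\in S$ and stop. Output $a$. For $d,a\in\mathbb{R}_+^n$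 let $\ell_{ur}(a)=1-\sum_i a_i$, $\ell_{or}(d,a)=\sum_i (a_i-d_i)^+$, $\ell_{ud}(d,a)=\sum_i(d_i-a_i)^+$ (with $y^+=\max(y,0)$), and $\ell(d,a)=\min\big(\ell_{ur}(a)+\ell_{or}(d,a),\,\ell_{ud}(d,a)\big)$. *)

(* Defs.v *)
From HB Require Import structures.
From mathcomp Require Import all_boot all_order all_algebra.
Set Implicit Arguments. Unset Strict Implicit. Unset Printing Implicit Defensive.
Import Order.TTheory GRing.Theory Num.Theory.
Local Open Scope ring_scope.

Section MMF.
Variables (R : realFieldType) (n : nat).

Definition pospart (y : R) : R := Num.max y 0.

Definition mmf_order (e d : 'I_n -> R) : seq 'I_n :=
  sort (fun i j => d i / e i <= d j / e j) (enum 'I_n).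

(* Main loop: s = remaining agents (the set S, in processing order),
   r = remaining resource, E = remaining entitlement, a = current allocation. *)
Fixpoint mmf_loop (e d : 'I_n -> R) (s : seq 'I_n) (r E : R) (a : 'I_n -> R)
  : 'I_n -> R :=
  match s with
  | [::] => a
  | j :: s' =>
      if d j < r * e j / E then
        mmf_loop e d s' (r - d j) (E - e j) (fun k => if k == j then d j else a k)
      else
        fun k => if k \in s then r * e k / E else a k
  end.

Definition mmf (e d : 'I_n -> R) : 'I_n -> R :=
  mmf_loop e d (mmf_order e d) 1 1 (fun _ => 0).

Definition loss_ur (a : 'I_n -> R) : R := 1 - \sum_i a i.
Definition loss_or (d a : 'I_n -> R) : R := \sum_i pospart (a i - d i).
Definition loss_ud (d a : 'I_n -> R) : R := \sum_i pospart (d i - a i).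
Definition loss (d a : 'I_n -> R) : R :=
  Num.min (loss_ur a + loss_or d a) (loss_ud d a).

End MMF.

(* Main.v *)
Require Import Defs.
From HB Require Import structures.
From mathcomp Require Import all_boot all_order all_algebra.
From mathcomp Require Import ring lra.
Import Order.TTheory GRing.Theory Num.Theory.
Local Open Scope ring_scope.

Section Loop.
Variables (R : realFieldType) (n : nat) (e d : 'I_n -> R).
Hypothesis he : forall i, 0 < e i.
Hypothesis hd : forall i, 0 <= d i.

Definition leK := fun i j : 'I_n => d i / e i <= d j / e j.

Definition spec (b : 'I_n -> R) := exists lam : R, 1 <= lam /\
  (forall k, b k = Num.min (d k) (lam * e k)) /\ \sum_k b k <= 1 /\
  (\sum_k b k = 1 \/ forall k, b k = d k).

Lemma leK_trans : transitive leK.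
Proof. by move=> x y z; rewrite /leK; apply: le_trans. Qed.

Lemma loop_spec s : forall r E a,
  uniq s -> sorted leK s -> E = \sum_(k | k \in s) e k -> E <= r ->
  (forall k, k \notin s -> a k = d k) ->
  \sum_(k | k \notin s) d k + r = 1 ->
  (s != [::] -> forall k, k \notin s -> d k <= r / E * e k) ->
  spec (mmf_loop e d s r E a).
Proof.
elim: s => [|j s IH] r E a Hu Hs HE HEr Ha Hsum Hlev /=.
- exists (1 + \sum_k d k / e k); split.
    rewrite lerDl; apply: sumr_ge0 => k _; apply: divr_ge0 => //; exact: ltW.
  have Hall : forall k, a k = d k by move=> k; apply: Ha.
  split.
    move=> k; rewrite Hall min_l //.
    have ek := he k.
    have -> : d k = d k / e k * e k by rewrite divfK // gt_eqF.
    rewrite ler_pM2r //.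
    rewrite (bigD1 k) //=.
    have : 0 <= \sum_(i < n | i != k) d i / e i.
      apply: sumr_ge0 => i _; apply: divr_ge0 => //; exact: ltW.
    lra.
  have HE0 : E = 0 by rewrite HE big_pred0.
  have Hs' : \sum_(k | k \notin [::]) d k = \sum_k d k by apply: eq_bigl => k; rewrite in_nil.
  have -> : \sum_k a k = \sum_k d k by apply: eq_bigr => k _; rewrite Hall.
  split; last by right.
  rewrite Hs' in Hsum; lra.
- case/andP: Hu => Hjs Hus.
  have Hps : path leK j s := Hs.
  have Hss : sorted leK s := path_sorted Hps.
  have HE' : E = e j + \sum_(k | k \in s) e k.
    rewrite HE (bigD1 j) ?mem_head //=; congr (_ + _); apply: eq_bigl => k.
    rewrite in_cons; case: (eqVneq k j) => [->|Hkj] /=; first by rewrite (negbTE Hjs).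
    by rewrite andbT.
  have Hsum' : \sum_(k | k \notin s) d k = d j + \sum_(k | k \notin j :: s) d k.
    rewrite (bigD1 j) //=; congr (_ + _); apply: eq_bigl => k.
    by rewrite in_cons negb_or andbC.
  have Hse : 0 <= \sum_(k | k \in s) e k by apply: sumr_ge0 => k _; exact: ltW.
  have hej := he j.
  have HE0 : 0 < E by lra.
  case: ifP => Hlt.
  + rewrite ltr_pdivlMr // in Hlt.
    have Hprod : 0 <= (E - e j) * (r - E) by apply: mulr_ge0; lra.
    have Hlevup : s != [::] -> r / E <= (r - d j) / (E - e j).
      move=> Hsn.
      have [x Hxs] : exists x, x \in s by move: Hsn; case: (s) => [|x s'] // _; exists x; rewrite mem_head.
      have Hx : 0 < \sum_(k | k \in s) e k.
        rewrite (bigD1 x) //=.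
        have := he x.
        have : 0 <= \sum_(i < n | (i \in s) && (i != x)) e i.
          by apply: sumr_ge0 => k _; exact: ltW.
        lra.
      have HEj : 0 < E - e j by lra.
      rewrite -subr_ge0.
      have -> : (r - d j) / (E - e j) - r / E = (r * e j - d j * E) / (E * (E - e j)).
        by field; rewrite ?gt_eqF.
      apply: divr_ge0; first lra.
      by apply: mulr_ge0; lra.
    apply: IH => //.
    * lra.
    * have : d j * E < (r - E + e j) * E by nra.
      rewrite ltr_pM2r //; lra.
    * move=> k Hk; case: eqP => [->//|/eqP Hkj]; apply: Ha.
      by rewrite in_cons negb_or Hkj.
    * rewrite Hsum'; lra.
    * move=> Hsn k Hk.
      have {}Hlevup := Hlevup Hsn.
      have Hle : r / E * e k <= (r - d j) / (E - e j) * e k.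
        by rewrite ler_pM2r.
      apply: le_trans Hle.
      case: (eqVneq k j) => [->|Hkj].
        rewrite mulrAC ler_pdivlMr //; exact: ltW.
      by apply: Hlev => //; rewrite in_cons negb_or Hkj.
  + have Hge : r / E * e j <= d j by rewrite mulrAC leNgt Hlt.
    have HlamE : r / E <= d j / e j by rewrite ler_pdivlMr.
    have Hall := order_path_min leK_trans Hps.
    have Hin : forall k, k \in j :: s -> r / E * e k <= d k.
      move=> k; rewrite in_cons => /orP [/eqP ->//|Hk].
      have := allP Hall k Hk; rewrite /leK => Hjk.
      have hek := he k.
      rewrite -ler_pdivlMr //; exact: le_trans HlamE Hjk.
    exists (r / E); split; first by rewrite ler_pdivlMr // mul1r.
    split.
      move=> k; case: ifP => Hk.
        by rewrite min_r ?Hin // mulrAC.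
      rewrite Ha ?Hk // min_l //; apply: Hlev => //; by rewrite Hk.
    suff -> : \sum_k (if k \in j :: s then r * e k / E else a k) = 1.
      by split => //; left.
    rewrite (bigID (fun k => k \in j :: s)) /=.
    have -> : \sum_(i < n | i \in j :: s) (if i \in j :: s then r * e i / E else a i)
       = r / E * \sum_(i < n | i \in j :: s) e i.
      rewrite mulr_sumr; apply: eq_bigr => k ->; by rewrite mulrAC.
    have -> : \sum_(i < n | i \notin j :: s) (if i \in j :: s then r * e i / E else a i)
       = \sum_(i < n | i \notin j :: s) d i.
      apply: eq_bigr => k Hk; by rewrite (negbTE Hk) Ha.
    rewrite -HE divfK ?gt_eqF //; lra.
Qed.
Hypothesis hsum : \sum_i e i = 1.

Lemma mmf_spec : spec (mmf e d).
Proof.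
have Hmem : forall k, k \in mmf_order e d by move=> k; rewrite mem_sort mem_enum.
apply: loop_spec.
- by rewrite sort_uniq enum_uniq.
- by apply: sort_sorted => x y; exact: le_total.
- by rewrite -hsum; apply: eq_bigl => k; rewrite Hmem.
- by [].
- by move=> k; rewrite Hmem.
- rewrite big_pred0 ?add0r // => k; by rewrite Hmem.
- by move=> _ k; rewrite Hmem.
Qed.
End Loop.

Theorem theorem1 (R : realFieldType) (n : nat) (hn : (0 < n)%N)
  (e : 'I_n -> R) (he : forall i, 0 < e i) (hsum : \sum_i e i = 1)
  (dstar : 'I_n -> R) (hdstar : forall i, 0 <= dstar i)
  (u : 'I_n -> R -> R)
  (hu0 : forall i x, 0 <= x -> 0 <= u i x)
  (hinc : forall i x y, 0 <= x -> x < y -> y <= dstar i -> u i x < u i y)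
  (hconst : forall i x, dstar i <= x -> u i x = u i (dstar i)) :
  [/\ (* (i) efficiency *)
      loss dstar (mmf e dstar) = 0,
      (* (ii) fairness *)
      forall (i : 'I_n) (d : 'I_n -> R), (forall j, 0 <= d j) -> d i = dstar i ->
        u i (e i) <= u i (mmf e d i)
    & (* (iii) strategy-proofness *)
      forall (i : 'I_n) (d : 'I_n -> R), (forall j, 0 <= d j) ->
        u i (mmf e d i) <= u i (mmf e (fun k => if k == i then dstar i else d k) i)].
Proof.
have umono : forall i x y, 0 <= x -> x <= y -> u i x <= u i y.
  move=> i x y hx hxy; case: (ltP x (dstar i)) => Hx.
    case: (leP y (dstar i)) => Hy.
      case: (eqVneq x y) => [->//|Hne]; apply: ltW; apply: hinc => //.
      by rewrite lt_neqAle Hne hxy.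
    rewrite (hconst i y (ltW Hy)); apply: ltW; exact: hinc.
  rewrite (hconst i x Hx) hconst //; exact: le_trans Hx hxy.
have ubound : forall i x, 0 <= x -> u i x <= u i (dstar i).
  move=> i x hx; case: (leP x (dstar i)) => H; first exact: umono.
  by rewrite hconst // ltW.
split.
- have [lam [Hl [Hmin [Hle Hcase]]]] := @mmf_spec _ _ e dstar he hdstar hsum.
  have Hor : loss_or dstar (mmf e dstar) = 0.
    rewrite /loss_or big1 // => k _; rewrite /pospart Hmin max_r //.
    by rewrite subr_le0 ge_min lexx.
  have Hud0 : 0 <= loss_ud dstar (mmf e dstar).
    by apply: sumr_ge0 => k _; rewrite /pospart le_max lexx orbT.
  case: Hcase => [Hs1|Hall].
    by rewrite /loss Hor /loss_ur Hs1 subrr addr0 min_l.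
  have Hud : loss_ud dstar (mmf e dstar) = 0.
    by rewrite /loss_ud big1 // => k _; rewrite /pospart Hall subrr max_l.
  rewrite /loss Hud Hor addr0 min_r // /loss_ur; lra.
- move=> i d hd hdi.
  have [lam [Hl [Hmin _]]] := @mmf_spec _ _ e d he hd hsum.
  have hei := he i.
  rewrite Hmin hdi; case: (leP (e i) (dstar i)) => H.
    apply: umono; first exact: ltW.
    rewrite le_min H /=; nra.
  rewrite min_l; last by apply: (le_trans (ltW H)); nra.
  by rewrite (hconst i (e i) (ltW H)).
- move=> i d hd.
  set d' := fun k => if k == i then dstar i else d k.
  have hd' : forall k, 0 <= d' k by move=> k; rewrite /d'; case: eqP.
  have [lam [Hl [Hmin [Hle Hcase]]]] := @mmf_spec _ _ e d he hd hsum.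
  have [lam' [Hl' [Hmin' [Hle' Hcase']]]] := @mmf_spec _ _ e d' he hd' hsum.
  have hdi' : d' i = dstar i by rewrite /d' eqxx.
  have hei := he i.
  have Ha0 : 0 <= mmf e d i.
    rewrite Hmin le_min hd /=; apply: mulr_ge0; [lra | exact: ltW].
  case: (leP (dstar i) (lam' * e i)) => Hdi.
    rewrite (Hmin' i) hdi' min_l //; exact: ubound.
  have Hai' : mmf e d' i = lam' * e i by rewrite Hmin' hdi' min_r // ltW.
  case: Hcase' => [Hs1|Hall]; last first.
    have := Hall i; rewrite Hai' hdi' => Heq; rewrite Heq in Hdi.
    by rewrite ltxx in Hdi.
  rewrite Hai'; apply: umono => //.
  rewrite leNgt; apply/negP => Hgt.
  have H2 : mmf e d i <= lam * e i by rewrite Hmin ge_min lexx orbT.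
  have Hlam : lam' < lam by rewrite -(ltr_pM2r hei); exact: lt_le_trans Hgt H2.
  have Hk : forall k, k != i -> mmf e d' k <= mmf e d k.
    move=> k Hk; rewrite Hmin Hmin' /d' (negbTE Hk).
    rewrite le_min !ge_min lexx /=; apply/orP; right.
    by rewrite ler_pM2r // ltW.
  have : \sum_k mmf e d' k < \sum_k mmf e d k.
    rewrite (bigD1 i) //= [X in _ < X](bigD1 i) //=.
    apply: ltr_leD; first by rewrite Hai'.
    apply: ler_sum => k Hk'; exact: Hk.
  lra.
Qed.
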